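(* Let $d,k\ge 1$ and let $F=\{F^{(1)},\ldots,F^{(k)}\}$ be an SNRE of degree $(d,k)$, with associated sequences $(\gamma_{i;n})_{n\ge 0}$, $1\le i\le k$. Let $i,j\in\{1,\dots,k\}$. If the symbol $j$ is essential and $i$ induces $j$ (i.e. $i\to j$), then $i$ is essential.
   Context: An SNRE (system of nonlinear recursive equations) of degree $(d,k)$ consists of $k$ nonzero homogeneous polynomials $F^{(1)},\ldots,F^{(k)}$ of degree $d$ in $k$ variables $x_1,\dots,x_k$ with nonnegative integer coefficients, together with the sequences defined by $\gamma_{i;0}=1$ and $\gamma_{i;n}=F^{(i)}(\gamma_{1;n-1},\ldots,\gamma_{k;n-1})$ for $n\ge 1$, $1\le i\le k$ (so all $\gamma_{i;n}$ are positive integers). The symbol $i$ induces $j$, written $i\to j$, if the variable $x_j$ occurs in some monomial of $F^{(i)}$ having nonzero coefficient. A symbol $i$ is essential if $\gamma_{i;n}\ge 2$ for some $n\in\mathbb{N}$, and inessential otherwise (i.e. $\gamma_{i;n}=1$ for all $n$). *)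

(* Defs.v *)
From mathcomp Require Import all_boot.
Set Implicit Arguments. Unset Strict Implicit. Unset Printing Implicit Defensive.

(* A monomial in k variables of degree <= d is an exponent vector
   'I_k -> 'I_d.+1 ; a polynomial with nonnegative integer coefficients of
   degree <= d is a coefficient function on such monomials. *)
Definition monom (k d : nat) := {ffun 'I_k -> 'I_d.+1}.
Definition npoly (k d : nat) := monom k d -> nat.

Definition mdeg k d (m : monom k d) : nat := \sum_(j < k) (m j : nat).

Definition homog k d (P : npoly k d) : Prop :=
  forall m, P m <> 0 -> mdeg m = d.

Definition nonzero_poly k d (P : npoly k d) : Prop := exists m, P m <> 0.

Definition peval k d (P : npoly k d) (x : 'I_k -> nat) : nat :=
  \sum_(m : monom k d) P m * \prod_(j < k) x j ^ (m j).

Definition is_SNRE k d (F : 'I_k -> npoly k d) : Prop :=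
  forall i, nonzero_poly (F i) /\ homog (F i).

(* gamma F n i = gamma_{i;n} *)
Fixpoint gamma k d (F : 'I_k -> npoly k d) (n : nat) : 'I_k -> nat :=
  match n with
  | 0 => fun _ => 1
  | n'.+1 => fun i => peval (F i) (gamma F n')
  end.

Definition induces k d (F : 'I_k -> npoly k d) (i j : 'I_k) : Prop :=
  exists m, F i m <> 0 /\ 0 < (m j : nat).

Definition essential k d (F : 'I_k -> npoly k d) (i : 'I_k) : Prop :=
  exists n, 2 <= gamma F n i.

(* Main.v *)
Require Import Defs.
From mathcomp Require Import all_boot.

Lemma peval_ge k d (P : npoly k d) (x : 'I_k -> nat) (m : monom k d) :
  P m * \prod_(j < k) x j ^ (m j) <= peval P x.
Proof.
rewrite /peval (bigD1 m) //=; exact: leq_addr.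
Qed.

Lemma prod_ge k d (x : 'I_k -> nat) (m : monom k d) (j : 'I_k) :
  (forall l, 0 < x l) -> x j ^ (m j) <= \prod_(l < k) x l ^ (m l).
Proof.
move=> Hx; rewrite (bigD1 j) //=.
rewrite -{1}(muln1 (x j ^ m j)) leq_mul2l; apply/orP; right.
by apply: prodn_gt0 => l; rewrite expn_gt0 Hx.
Qed.

Lemma gamma_pos d k (F : 'I_k -> npoly k d) :
  is_SNRE F -> forall n l, 0 < gamma F n l.
Proof.
move=> HF; elim=> [|n IH] l //=.
have [m Hm] := (HF l).1.
apply: leq_trans (@peval_ge _ _ _ _ m).
rewrite muln_gt0 lt0n; apply/andP; split; first by apply/eqP.
by apply: prodn_gt0 => l'; rewrite expn_gt0 IH.
Qed.

Theorem lemma1 (d k : nat) (F : 'I_k -> npoly k d) (i j : 'I_k) :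
  1 <= d -> 1 <= k -> is_SNRE F ->
  essential F j -> induces F i j -> essential F i.
Proof.
move=> _ _ HF [n Hn] [m [Hm Hmj]].
exists n.+1 => /=.
apply: leq_trans (@peval_ge _ _ _ _ m).
have H1 : 0 < F i m by rewrite lt0n; apply/eqP.
apply: leq_trans (leq_pmull _ H1).
apply: leq_trans (@prod_ge _ _ _ m j (@gamma_pos _ _ F HF n)).
apply: leq_trans Hn _.
rewrite -{1}(expn1 (gamma F n j)) leq_pexp2l //.
exact: gamma_pos.
Qed.
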